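(* For any path $\omega\in\Omega$ that is CH-random for a computable precise forecasting system $\varphi$: $\big[\liminf_{n\to\infty}\varphi(\omega_{1:n}),\ \limsup_{n\to\infty}\varphi(\omega_{1:n})\big]\subseteq I_\textnormal{CH}(\omega).$
   Context: $\mathcal{X}=\{0,1\}$; $\Omega=\mathcal{X}^{\mathbb{N}}$ (paths); $\mathbb{S}=\bigcup_{n\ge0}\mathcal X^n$ (situations), $\omega_{1:n}=(\omega_1,\dots,\omega_n)$, $\omega_{1:0}$ the empty string. $\mathcal{I}$: nonempty closed intervals $I\subseteq[0,1]$. A forecasting system is $\varphi:\mathbb S\to\mathcal I$, $\underline\varphi=\min\varphi$, $\overline\varphi=\max\varphi$; precise if $\underline\varphi=\overline\varphi$ (then $\varphi(s)$ is identified with the number $\underline\varphi(s)$); an interval forecast $I$ is identified with the constant forecasting system $s\mapsto I$. $\varphi$ is computable if there are recursive $\underline q,\overline q:\mathbb S\times\mathbb N_0\to\mathbb Q$ with $|\underline\varphi(s)-\underline q(s,n)|<2^{-n}$ and $|\overline\varphi(s)-\overline q(s,n)|<2^{-n}$. A path $\omega$ is CH-random for $\varphi$ if for every recursive selection process $S:\mathbb S\to\{0,1\}$ with $\sum_{k=0}^{n-1}S(\omega_{1:k})\to\infty$: $\liminf_n \frac{\sum_{k<n}S(\omega_{1:k})[\omega_{k+1}-\underline\varphi(\omega_{1:k})]}{\sum_{k<n}S(\omega_{1:k})}\ge0$ and $\limsup_n \frac{\sum_{k<n}S(\omega_{1:k})[\omega_{k+1}-\overline\varphi(\omega_{1:k})]}{\sum_{k<n}S(\omega_{1:k})}\le0$.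 $\mathcal I_\textnormal{CH}(\omega)=\{I\in\mathcal I:\omega\text{ CH-random for }I\}$, $I_\textnormal{CH}(\omega)=\bigcap_{I\in\mathcal I_\textnormal{CH}(\omega)}I$. *)

(* Defs.v *)
From mathcomp Require Import all_boot all_order all_algebra.
From mathcomp Require Import all_classical all_reals all_analysis.
Set Implicit Arguments. Unset Strict Implicit. Unset Printing Implicit Defensive.
Import Order.TTheory GRing.Theory Num.Theory.
Local Open Scope ring_scope.
Local Open Scope classical_set_scope.

Inductive prcode : Type :=
| PZero
| PSucc
| PProj (i : nat)
| PComp (f : prcode) (gs : prcodes)
| PPrec (f g : prcode)
| PMin (f : prcode)
with prcodes : Type :=
| PNil
| PCons (c : prcode) (cs : prcodes).

Inductive preval : prcode -> list nat -> nat -> Prop :=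
| ev_zero v : preval PZero v 0
| ev_succ x v : preval PSucc (x :: v) x.+1
| ev_proj i v : (i < size v)%N -> preval (PProj i) v (nth 0%N v i)
| ev_comp f gs v ys y :
    prevals gs v ys -> preval f ys y -> preval (PComp f gs) v y
| ev_prec0 f g v y : preval f v y -> preval (PPrec f g) (0%N :: v) y
| ev_precS f g n v y z :
    preval (PPrec f g) (n :: v) y -> preval g (n :: y :: v) z ->
    preval (PPrec f g) (n.+1 :: v) z
| ev_min f v n :
    (forall m, (m < n)%N -> exists k, preval f (m :: v) k.+1) ->
    preval f (n :: v) 0 -> preval (PMin f) v n
with prevals : prcodes -> list nat -> list nat -> Prop :=
| evs_nil v : prevals PNil v [::]
| evs_cons c cs v y ys :
    preval c v y -> prevals cs v ys -> prevals (PCons c cs) v (y :: ys).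

(* X = {0,1} is bool; a path omega = (omega_1, omega_2, ...) is nat -> bool
   with omega_{k+1} = omega k; a situation is a finite sequence of bits. *)
Definition bpath := nat -> bool.
Definition situation := seq bool.

Definition wprefix (w : bpath) (n : nat) : situation := mkseq w n.

(* standard effective injective coding of situations by naturals:
   the binary numeral 1 s_1 s_2 ... s_n *)
Definition sit_code (s : situation) : nat :=
  foldl (fun acc (b : bool) => (2 * acc + b)%N) 1%N s.

Definition recursive_selection (S : situation -> bool) : Prop :=
  exists c : prcode, forall s, preval c [:: sit_code s] (nat_of_bool (S s)).

Definition recursive_sn (q : situation -> nat -> nat) : Prop :=
  exists c : prcode, forall s n, preval c [:: sit_code s; n] (q s n).

Definition recursive_sn_rat (q : situation -> nat -> rat) : Prop :=
  exists a b c : situation -> nat -> nat,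
    [/\ recursive_sn a, recursive_sn b, recursive_sn c &
        forall s n, q s n = ((a s n)%:Q - (b s n)%:Q) / ((c s n).+1)%:Q].

Record interval (R : realType) := Interval {
  ilo : R; ihi : R;
  ilo_ge0 : 0 <= ilo; ilo_le_ihi : ilo <= ihi; ihi_le1 : ihi <= 1 }.

Definition forecasting_system (R : realType) := situation -> interval R.

Definition flo (R : realType) (phi : forecasting_system R) (s : situation) : R :=
  ilo (phi s).
Definition fhi (R : realType) (phi : forecasting_system R) (s : situation) : R :=
  ihi (phi s).

Definition precise (R : realType) (phi : forecasting_system R) : Prop :=
  forall s, flo phi s = fhi phi s.

Definition const_fs (R : realType) (I : interval R) : forecasting_system R :=
  fun _ => I.

Definition computable_fs (R : realType) (phi : forecasting_system R) : Prop :=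
  exists ql qh : situation -> nat -> rat,
    [/\ recursive_sn_rat ql, recursive_sn_rat qh,
        forall s n, `|flo phi s - ratr (ql s n)| < 2%:R ^- n &
        forall s n, `|fhi phi s - ratr (qh s n)| < 2%:R ^- n].

Definition sel_count (S : situation -> bool) (w : bpath) (n : nat) : nat :=
  (\sum_(k < n) S (wprefix w k))%N.

Definition sel_avg (R : realType) (S : situation -> bool) (w : bpath)
    (f : situation -> R) (n : nat) : R :=
  (\sum_(k < n) (S (wprefix w k))%:R * ((w k)%:R - f (wprefix w k)))
    / (sel_count S w n)%:R.

Definition CH_random (R : realType) (phi : forecasting_system R) (w : bpath) : Prop :=
  forall S : situation -> bool, recursive_selection S ->
    (forall M : nat, exists n, (M <= sel_count S w n)%N) ->
    0 <= limn_inf (sel_avg S w (flo phi)) /\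
    limn_sup (sel_avg S w (fhi phi)) <= 0.

Definition I_CH (R : realType) (w : bpath) : set R :=
  [set x | forall I : interval R, CH_random (const_fs I) w ->
             ilo I <= x <= ihi I].

(* Main.v *)
Require Import Defs.
From mathcomp Require Import all_boot all_order all_algebra.
From mathcomp Require Import all_classical all_reals all_analysis.
Import Order.TTheory GRing.Theory Num.Theory.
From mathcomp Require Import lra.

Definition cconst : nat -> prcode :=
  fix F k := match k with 0 => PZero | k'.+1 => PComp PSucc (PCons (F k') PNil) end.

Lemma ev_const k v : preval (cconst k) v k.
Proof.
elim: k => [|k IH] /=; first exact: ev_zero.
apply: ev_comp (ev_succ _ [::]); apply: evs_cons IH (evs_nil _).
Qed.

Definition comp2 f g1 g2 := PComp f (PCons g1 (PCons g2 PNil)).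

Lemma ev_comp2 f g1 g2 v y1 y2 y :
  preval g1 v y1 -> preval g2 v y2 -> preval f [:: y1; y2] y ->
  preval (comp2 f g1 g2) v y.
Proof.
move=> h1 h2 hf; apply: ev_comp hf.
by apply: evs_cons h1 _; apply: evs_cons h2 (evs_nil _).
Qed.

Arguments ev_comp2 {f g1 g2 v y1 y2 y}.

Lemma ev_proj0 x v : preval (PProj 0) (x :: v) x.
Proof. by apply: (@ev_proj 0 (x :: v)). Qed.

Lemma ev_proj1 x y v : preval (PProj 1) (x :: y :: v) y.
Proof. by apply: (@ev_proj 1 (x :: y :: v)). Qed.

Lemma ev_proj2 x y z v : preval (PProj 2) (x :: y :: z :: v) z.
Proof. by apply: (@ev_proj 2 (x :: y :: z :: v)). Qed.

Definition cadd := PPrec (PProj 0) (PComp PSucc (PCons (PProj 1) PNil)).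

Lemma ev_add x y : preval cadd [:: x; y] (x + y).
Proof.
elim: x => [|x IH]; first exact: ev_prec0 _ (ev_proj0 _ _).
apply: ev_precS IH _; rewrite addSn.
apply: ev_comp (ev_succ _ [::]); apply: evs_cons (ev_proj1 _ _ _) (evs_nil _).
Qed.

Definition cmul := PPrec PZero (comp2 cadd (PProj 1) (PProj 2)).

Lemma ev_mul x y : preval cmul [:: x; y] (x * y).
Proof.
elim: x => [|x IH]; first exact: ev_prec0 _ (ev_zero _).
apply: ev_precS IH _; rewrite mulSn addnC.
apply: ev_comp2 (ev_proj1 _ _ _) (ev_proj2 _ _ _ _) (ev_add _ _).
Qed.

Definition cpred := PPrec PZero (PProj 0).
Lemma ev_pred x : preval cpred [:: x] x.-1.
Proof.
elim: x => [|x IH]; first exact: ev_prec0 _ (ev_zero _).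
exact: ev_precS IH (ev_proj0 _ _).
Qed.

Definition csubr := PPrec (PProj 0) (PComp cpred (PCons (PProj 1) PNil)).
Lemma ev_subr x y : preval csubr [:: x; y] (y - x).
Proof.
elim: x => [|x IH]; first by rewrite subn0; exact: ev_prec0 _ (ev_proj0 _ _).
apply: ev_precS IH _; rewrite subnS.
apply: ev_comp (ev_pred _); apply: evs_cons (ev_proj1 _ _ _) (evs_nil _).
Qed.

Definition csg := PPrec PZero (PComp PSucc (PCons PZero PNil)).
Lemma ev_sg z : preval csg [:: z] (0 < z)%N.
Proof.
elim: z => [|z IH]; first exact: ev_prec0 _ (ev_zero _).
apply: ev_precS IH _.
apply: ev_comp (ev_succ _ [::]); apply: evs_cons (ev_zero _) (evs_nil _).
Qed.

Definition clt := PComp csg (PCons csubr PNil).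
Lemma ev_lt x y : preval clt [:: x; y] (x < y)%N.
Proof.
rewrite -subn_gt0; apply: ev_comp (ev_sg _).
by apply: evs_cons (ev_subr _ _) (evs_nil _).
Qed.
Local Open Scope ring_scope.
Local Open Scope classical_set_scope.

Lemma ratr_q (R : realType) (a b c : nat) :
  ratr ((a%:Q - b%:Q) / (c.+1)%:Q) = (a%:R - b%:R) / (c.+1)%:R :> R.
Proof. by rewrite fmorph_div rmorphB /= !ratr_int !pmulrn. Qed.

Lemma cmp1 (R : realType) (a b c u v : nat) : (0 < v)%N ->
  (u%:R / v%:R < (a%:R - b%:R) / (c.+1)%:R :> R) = (b * v + u * c.+1 < a * v)%N.
Proof.
move=> v0.
have hv : (0 : R) < v%:R by rewrite ltr0n.
have hc : (0 : R) < (c.+1)%:R by rewrite ltr0n.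
rewrite ltr_pdivlMr // mulrAC ltr_pdivrMr // mulrBl -!natrM ltrBrDl -natrD ltr_nat.
by rewrite addnC mulnC.
Qed.

Lemma cmp2 (R : realType) (a b c u v : nat) : (0 < v)%N ->
  ((a%:R - b%:R) / (c.+1)%:R < u%:R / v%:R :> R) = (a * v < b * v + u * c.+1)%N.
Proof.
move=> v0.
have hv : (0 : R) < v%:R by rewrite ltr0n.
have hc : (0 : R) < (c.+1)%:R by rewrite ltr0n.
rewrite ltr_pdivrMr // mulrAC ltr_pdivlMr // mulrBl -!natrM ltrBlDl -natrD ltr_nat.
by rewrite addnC mulnC.
Qed.

Lemma dens (R : realType) (x y : R) : 0 <= x -> x < y ->
  exists u v : nat, (0 < v)%N /\ x < u%:R / v%:R < y.
Proof.
move=> x0 xy.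
have yx : 0 < y - x by rewrite subr_gt0.
pose v := (Num.bound ((y - x)^-1)).+1.
have hv : (y - x)^-1 < v%:R.
  apply: lt_le_trans (archi_boundP _) _; first by rewrite invr_ge0 ltW.
  by rewrite ler_nat.
have v0 : (0 : R) < v%:R by rewrite ltr0n.
have h1 : 1 < (y - x) * v%:R.
  by rewrite -[X in X < _](mulfV (lt0r_neq0 yx)) ltr_pM2l.
rewrite mulrBl in h1.
exists (Num.truncn (x * v%:R)).+1, v; split => //.
rewrite ltr_pdivlMr // ltr_pdivrMr // truncnS_gt /=.
have := truncn_le (x * v%:R); rewrite mulr_ge0 // => ht.
rewrite -natr1; lra.
Qed.

Lemma pow_small (R : realType) (d : R) : 0 < d -> exists N : nat, 2%:R ^- N < d.
Proof.
move=> d0; exists (Num.bound d^-1).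
have hb : d^-1 < (Num.bound d^-1)%:R by apply: archi_boundP; rewrite invr_ge0 ltW.
have h2 : ((Num.bound d^-1)%:R : R) < 2%:R ^+ (Num.bound d^-1).
  by rewrite -natrX ltr_nat ltn_expl.
rewrite invf_plt ?posrE ?exprn_gt0 ?ltr0n //.
exact: lt_trans hb h2.
Qed.

Lemma sel_countS S w n :
  sel_count S w n.+1 = (sel_count S w n + S (wprefix w n))%N.
Proof. by rewrite /sel_count big_ord_recr. Qed.

Lemma sel_count_le S w n : (sel_count S w n <= n)%N.
Proof.
elim: n => [|n IH]; first by rewrite /sel_count big_ord0.
by rewrite sel_countS; case: (S _) => /=; rewrite ?addn1 ?addn0 ?ltnS // leqW.
Qed.

Lemma sel_count_mono S w n m : (n <= m)%N ->
  (sel_count S w n <= sel_count S w m)%N.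
Proof.
elim: m => [|m IH]; first by rewrite leqn0 => /eqP->.
rewrite leq_eqVlt => /orP[/eqP->//|]; rewrite ltnS => /IH h.
by rewrite sel_countS; apply: leq_trans h (leq_addr _ _).
Qed.

Lemma avg_bound (R : realType) S w (g : situation -> R) n :
  (forall s, 0 <= g s <= 1) -> `|sel_avg S w g n| <= 1.
Proof.
move=> hg; rewrite /sel_avg normrM normfV.
have [->|c0] := posnP (sel_count S w n); first by rewrite normr0 invr0 mulr0.
have cp : (0 : R) < (sel_count S w n)%:R by rewrite ltr0n.
rewrite normr_nat ler_pdivrMr // mul1r.
rewrite /sel_count natr_sum; apply: le_trans (ler_norm_sum _ _ _) _.
apply: ler_sum => k _.
rewrite normrM ger0_norm ?ler0n //; case: (S _) => /=; rewrite ?mul0r ?mul1r //.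
have /andP[g0 g1] := hg (wprefix w k).
by case: (w k) => /=; rewrite ler_norml; apply/andP; split; lra.
Qed.

Lemma avg_diff (R : realType) (S : situation -> bool) (w : bpath) (g1 g2 : situation -> R) e n :
  (forall s, S s -> g2 s + e <= g1 s) -> (0 < sel_count S w n)%N ->
  sel_avg S w g1 n + e <= sel_avg S w g2 n.
Proof.
move=> hg c0; rewrite /sel_avg.
have cp : (0 : R) < (sel_count S w n)%:R by rewrite ltr0n.
have -> : forall x : R, x / (sel_count S w n)%:R + e =
    (x + e * (sel_count S w n)%:R) / (sel_count S w n)%:R.
  by move=> x; rewrite mulrDl mulfK // gt_eqF.
rewrite ler_pM2r ?invr_gt0 //.
rewrite /sel_count natr_sum mulr_sumr -big_split /=; apply: ler_sum => k _.
case hS: (S _) => /=; last by rewrite !mul0r mulr0 addr0.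
by rewrite !mul1r mulr1; have := hg _ hS; lra.
Qed.
Lemma bnd_fun (R : realType) (u : R^o^nat) (B : R) : (forall n, `|u n| <= B) -> bounded_fun u.
Proof.
move=> hB; rewrite /bounded_near; near=> M => x _ /=.
apply: le_trans (hB x) _; near: M; apply: nbhs_pinfty_ge; exact: num_real.
Unshelve. all: by end_near. Qed.

Lemma G1 (R : realType) (u : R^o^nat) (B t : R) : (forall n, `|u n| <= B) ->
  (forall M, exists2 n, (M <= n)%N & t <= u n) -> t <= limn_sup u.
Proof.
move=> hB hf; rewrite limn_supE; last exact: bnd_fun hB.
apply: lb_le_inf; first by exists (sups u 0); exists 0%N.
move=> _ [m _ <-]; have [n mn tn] := hf m; apply: le_trans tn _.
apply: ub_le_sup; last by exists n.
by exists B => _ [k _ <-]; exact: le_trans (ler_norm _) (hB k).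
Qed.

Lemma G2 (R : realType) (u : R^o^nat) (B t : R) : (forall n, `|u n| <= B) ->
  (forall M, exists2 n, (M <= n)%N & u n <= t) -> limn_inf u <= t.
Proof.
move=> hB hf; rewrite limn_infE; last exact: bnd_fun hB.
apply: ge_sup; first by exists (infs u 0); exists 0%N.
move=> _ [m _ <-]; have [n mn tn] := hf m; apply: le_trans _ tn.
apply: ge_inf; last by exists n.
by exists (- B) => _ [k _ <-]; have := hB k; rewrite ler_norml => /andP[].
Qed.

Lemma F1 (R : realType) (u : R^o^nat) (B t : R) : (forall n, `|u n| <= B) -> t < limn_sup u ->
  forall M, exists2 n, (M <= n)%N & t < u n.
Proof.
move=> hB; rewrite limn_supE; last exact: bnd_fun hB.
move=> ht M; case: (pselect (exists2 n, (M <= n)%N & t < u n)) => // hn.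
have : inf (range (sups u)) <= t; last by rewrite leNgt ht.
apply: (@le_trans _ _ (sups u M)).
  apply: ge_inf; last by exists M.
  apply: bounded_fun_has_lbound_sups; exact: bnd_fun hB.
apply: ge_sup; first by exists (u M); exists M => /=.
move=> _ [k /= Mk <-]; rewrite leNgt; apply/negP => tk; apply: hn; by exists k.
Qed.

Lemma F2 (R : realType) (u : R^o^nat) (B t : R) : (forall n, `|u n| <= B) -> limn_inf u < t ->
  forall M, exists2 n, (M <= n)%N & u n < t.
Proof.
move=> hB; rewrite limn_infE; last exact: bnd_fun hB.
move=> ht M; case: (pselect (exists2 n, (M <= n)%N & u n < t)) => // hn.
have : t <= sup (range (infs u)); last by rewrite leNgt ht.
apply: (@le_trans _ _ (infs u M)); last first.
  apply: ub_le_sup; last by exists M.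
  apply: bounded_fun_has_ubound_infs; exact: bnd_fun hB.
apply: lb_le_inf; first by exists (u M); exists M => /=.
move=> _ [k /= Mk <-]; rewrite leNgt; apply/negP => tk; apply: hn; by exists k.
Qed.

Lemma contra_sup (R : realType) (A B : nat -> R) (e : R) (cnt : nat -> nat) :
  0 < e -> (forall n, `|A n| <= 1) -> (forall n, `|B n| <= 1) ->
  (forall n, (0 < cnt n)%N -> A n + e <= B n) -> (forall n, (cnt n <= n)%N) ->
  (forall M, exists n, (M <= cnt n)%N) ->
  0 <= limn_inf A -> limn_sup B <= 0 -> False.
Proof.
move=> e0 hA hB hd hle hc liA lsB.
have [M0 hM0] : exists M0, forall n, (M0 <= n)%N -> - (e / 2) < A n.
  apply: contrapT => hno.
  have : limn_inf A <= - (e / 2).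
    apply: (@G2 _ _ 1) => // M; apply: contrapT => hn; apply: hno.
    exists M => n Mn; rewrite ltNge; apply/negP => An; apply: hn; by exists n.
  lra.
have : e / 2 <= limn_sup B; last by lra.
apply: (@G1 _ _ 1) => // M.
have [n hn] := hc (maxn M M0).+1.
have cn0 : (0 < cnt n)%N by apply: leq_trans hn.
have Mn : (maxn M M0 < n)%N by apply: leq_trans hn (hle n).
exists n; first by apply: leq_trans (ltnW Mn); rewrite leq_maxl.
have := hd n cn0; have := hM0 n (leq_trans (leq_maxr M M0) (ltnW Mn)); lra.
Qed.

Lemma contra_inf (R : realType) (A B : nat -> R) (e : R) (cnt : nat -> nat) :
  0 < e -> (forall n, `|A n| <= 1) -> (forall n, `|B n| <= 1) ->
  (forall n, (0 < cnt n)%N -> B n + e <= A n) -> (forall n, (cnt n <= n)%N) ->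
  (forall M, exists n, (M <= cnt n)%N) ->
  limn_sup A <= 0 -> 0 <= limn_inf B -> False.
Proof.
move=> e0 hA hB hd hle hc lsA liB.
have [M0 hM0] : exists M0, forall n, (M0 <= n)%N -> A n < e / 2.
  apply: contrapT => hno.
  have : e / 2 <= limn_sup A.
    apply: (@G1 _ _ 1) => // M; apply: contrapT => hn; apply: hno.
    exists M => n Mn; rewrite ltNge; apply/negP => An; apply: hn; by exists n.
  lra.
have : limn_inf B <= - (e / 2); last by lra.
apply: (@G2 _ _ 1) => // M.
have [n hn] := hc (maxn M M0).+1.
have cn0 : (0 < cnt n)%N by apply: leq_trans hn.
have Mn : (maxn M M0 < n)%N by apply: leq_trans hn (hle n).
exists n; first by apply: leq_trans (ltnW Mn); rewrite leq_maxl.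
have := hd n cn0; have := hM0 n (leq_trans (leq_maxr M M0) (ltnW Mn)); lra.
Qed.

Lemma ev_at (cx : prcode) (x : situation -> nat -> nat) N :
  (forall s n, preval cx [:: sit_code s; n] (x s n)) ->
  forall s, preval (comp2 cx (PProj 0) (cconst N)) [:: sit_code s] (x s N).
Proof. by move=> hx s; apply: ev_comp2 (ev_proj0 _ _) (ev_const _ _) (hx s N). Qed.

Definition clhs cb cc N u v :=
  comp2 cadd (comp2 cmul (comp2 cb (PProj 0) (cconst N)) (cconst v))
    (comp2 cmul (cconst u) (comp2 cadd (comp2 cc (PProj 0) (cconst N)) (cconst 1))).
Definition crhs ca N v := comp2 cmul (comp2 ca (PProj 0) (cconst N)) (cconst v).

Lemma ev_lhs cb cc (b c : situation -> nat -> nat) N u v :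
  (forall s n, preval cb [:: sit_code s; n] (b s n)) ->
  (forall s n, preval cc [:: sit_code s; n] (c s n)) ->
  forall s, preval (clhs cb cc N u v) [:: sit_code s] (b s N * v + u * (c s N).+1)%N.
Proof.
move=> hb hc s.
apply: ev_comp2 (ev_add _ _).
  exact: ev_comp2 (@ev_at _ _ N hb s) (ev_const _ _) (ev_mul _ _).
apply: ev_comp2 (ev_const _ _) _ (ev_mul _ _).
rewrite -[(c s N).+1]addn1; exact: ev_comp2 (@ev_at _ _ N hc s) (ev_const _ _) (ev_add _ _).
Qed.

Lemma ev_rhs ca (a : situation -> nat -> nat) N v :
  (forall s n, preval ca [:: sit_code s; n] (a s n)) ->
  forall s, preval (crhs ca N v) [:: sit_code s] (a s N * v)%N.
Proof. by move=> ha s; exact: ev_comp2 (@ev_at _ _ N ha s) (ev_const _ _) (ev_mul _ _). Qed.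

Lemma rec_sel_sup (a b c : situation -> nat -> nat) N u v :
  recursive_sn a -> recursive_sn b -> recursive_sn c ->
  recursive_selection (fun s => (b s N * v + u * (c s N).+1 < a s N * v)%N).
Proof.
move=> [ca hca] [cb hcb] [cc hcc].
exists (comp2 clt (clhs cb cc N u v) (crhs ca N v)) => s.
exact: ev_comp2 (@ev_lhs _ _ _ _ N u v hcb hcc s) (@ev_rhs _ _ N v hca s) (ev_lt _ _).
Qed.

Lemma rec_sel_inf (a b c : situation -> nat -> nat) N u v :
  recursive_sn a -> recursive_sn b -> recursive_sn c ->
  recursive_selection (fun s => (a s N * v < b s N * v + u * (c s N).+1)%N).
Proof.
move=> [ca hca] [cb hcb] [cc hcc].
exists (comp2 clt (crhs ca N v) (clhs cb cc N u v)) => s.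
exact: ev_comp2 (@ev_rhs _ _ N v hca s) (@ev_lhs _ _ _ _ N u v hcb hcc s) (ev_lt _ _).
Qed.

Lemma flo01 (R : realType) (phi : forecasting_system R) s : 0 <= flo phi s <= 1.
Proof.
rewrite /flo; case: (phi s) => lo hi h0 h1 h2 /=; apply/andP; split => //.
exact: le_trans h1 h2.
Qed.

Lemma fhi01 (R : realType) (phi : forecasting_system R) s : 0 <= fhi phi s <= 1.
Proof.
rewrite /fhi; case: (phi s) => lo hi h0 h1 h2 /=; apply/andP; split => //.
exact: le_trans h0 h1.
Qed.

Arguments flo01 {R}.
Arguments pow_small {R d}.
Arguments F1 {R u B t}.
Arguments F2 {R u B t}.
Arguments fhi01 {R}.

Lemma sup_case (R : realType) (phi : forecasting_system R) (w : bpath) (I : Defs.interval R) :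
  computable_fs phi -> CH_random phi w -> CH_random (const_fs I) w ->
  limn_sup (fun n => flo phi (wprefix w n)) <= ihi I.
Proof.
move=> [ql [qh [[a [b [c [ha hb hc hq]]]] _ hlo _]]] hrand hI.
rewrite leNgt; apply/negP => hL.
set f := (fun n => flo phi (wprefix w n)) in hL.
set L := limn_sup f in hL.
have fB n : `|f n| <= 1.
  by have /andP[? ?] := flo01 phi (wprefix w n); rewrite ger0_norm.
have h0 : 0 <= ihi I by apply: le_trans (ilo_ge0 I) (ilo_le_ihi I).
have h1 : ihi I <= 1 by exact: ihi_le1.
pose d := (L - ihi I) / 3.
have hd3 : L = ihi I + 3 * d by rewrite /d; lra.
have d0 : 0 < d by lra.
have [N hN] := pow_small d0.
set eN := 2%:R ^- N in hN.
have eN0 : 0 < eN by rewrite /eN invr_gt0 exprn_gt0 // ltr0n.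
have [u [v [v0 /andP[r1 r2]]]] :=
  @dens R (ihi I + d) (ihi I + 2 * d) (ltac:(lra)) (ltac:(lra)).
set r := u%:R / v%:R in r1 r2.
pose S s := (b s N * v + u * (c s N).+1 < a s N * v)%N.
have selE s : S s = (r < ratr (ql s N)) by rewrite /S hq ratr_q cmp1.
have hsel1 s : S s -> ihi I + (d - eN) <= flo phi s.
  rewrite selE => rs; have := hlo s N; rewrite -/eN ltr_norml => /andP[k1 k2]; lra.
have hsel2 s : r + eN < flo phi s -> S s.
  move=> rs; rewrite selE; have := hlo s N; rewrite -/eN ltr_norml => /andP[k1 k2]; lra.
have hS : recursive_selection S := @rec_sel_sup a b c N u v ha hb hc.
have hcnt : forall M, exists n, (M <= sel_count S w n)%N.
  elim => [|M [n hn]]; first by exists 0%N.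
  have rL : r + eN < L by lra.
  have [m nm fm] := F1 fB rL n.
  exists m.+1; rewrite sel_countS (hsel2 _ fm) addn1 ltnS.
  exact: leq_trans hn (@sel_count_mono S w n m nm).
have [hA _] := hrand S hS hcnt.
have [_ hB] := hI S hS hcnt.
apply: (@contra_sup R (sel_avg S w (flo phi)) (sel_avg S w (fhi (const_fs I)))
  (d - eN) (sel_count S w) _ _ _ _ _ _ hA hB).
- lra.
- by move=> n; apply: avg_bound => s; exact: flo01.
- by move=> n; apply: avg_bound => s; exact: fhi01.
- move=> n cn; apply: avg_diff cn => s /hsel1; rewrite /fhi /const_fs /=; lra.
- exact: sel_count_le.
- exact: hcnt.
Qed.

Lemma inf_case (R : realType) (phi : forecasting_system R) (w : bpath) (I : Defs.interval R) :
  precise phi -> computable_fs phi -> CH_random phi w -> CH_random (const_fs I) w ->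
  ilo I <= limn_inf (fun n => flo phi (wprefix w n)).
Proof.
move=> hprec [ql [qh [[a [b [c [ha hb hc hq]]]] _ hlo _]]] hrand hI.
rewrite leNgt; apply/negP => hL.
set f := (fun n => flo phi (wprefix w n)) in hL.
set L := limn_inf f in hL.
have fB n : `|f n| <= 1.
  by have /andP[? ?] := flo01 phi (wprefix w n); rewrite ger0_norm.
have L0 : 0 <= L.
  rewrite leNgt; apply/negP => hL0; have [n _ fn] := F2 fB hL0 0%N.
  have := flo01 phi (wprefix w n); rewrite /f /= in fn; lra.
have h0 : 0 <= ilo I by exact: ilo_ge0.
have h1 : ilo I <= 1 by apply: le_trans (ilo_le_ihi I) (ihi_le1 I).
pose d := (ilo I - L) / 3.
have hd3 : ilo I = L + 3 * d by rewrite /d; lra.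
have d0 : 0 < d by lra.
have [N hN] := pow_small d0.
set eN := 2%:R ^- N in hN.
have eN0 : 0 < eN by rewrite /eN invr_gt0 exprn_gt0 // ltr0n.
have [u [v [v0 /andP[r1 r2]]]] :=
  @dens R (L + d) (L + 2 * d) (ltac:(lra)) (ltac:(lra)).
set r := u%:R / v%:R in r1 r2.
pose S s := (a s N * v < b s N * v + u * (c s N).+1)%N.
have selE s : S s = (ratr (ql s N) < r) by rewrite /S hq ratr_q cmp2.
have hsel1 s : S s -> fhi phi s + (d - eN) <= ilo I.
  rewrite selE -hprec => rs; have := hlo s N; rewrite -/eN ltr_norml => /andP[k1 k2]; lra.
have hsel2 s : flo phi s < r - eN -> S s.
  move=> rs; rewrite selE; have := hlo s N; rewrite -/eN ltr_norml => /andP[k1 k2]; lra.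
have hS : recursive_selection S := @rec_sel_inf a b c N u v ha hb hc.
have hcnt : forall M, exists n, (M <= sel_count S w n)%N.
  elim => [|M [n hn]]; first by exists 0%N.
  have rL : L < r - eN by lra.
  have [m nm fm] := F2 fB rL n.
  exists m.+1; rewrite sel_countS (hsel2 _ fm) addn1 ltnS.
  exact: leq_trans hn (@sel_count_mono S w n m nm).
have [_ hA] := hrand S hS hcnt.
have [hB _] := hI S hS hcnt.
apply: (@contra_inf R (sel_avg S w (fhi phi)) (sel_avg S w (flo (const_fs I)))
  (d - eN) (sel_count S w) _ _ _ _ _ _ hA hB).
- lra.
- by move=> n; apply: avg_bound => s; exact: fhi01.
- by move=> n; apply: avg_bound => s; exact: flo01.
- move=> n cn; apply: avg_diff cn => s /hsel1; rewrite /flo /const_fs /=; lra.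
- exact: sel_count_le.
- exact: hcnt.
Qed.

Theorem proposition16 (R : realType) (phi : forecasting_system R) (w : bpath) :
  precise phi -> computable_fs phi -> CH_random phi w ->
  `[limn_inf (fun n => flo phi (wprefix w n)),
    limn_sup (fun n => flo phi (wprefix w n))] `<=` I_CH w.
Proof.
move=> hprec hcomp hrand x; rewrite /= in_itv /= => /andP[xL xU] I hI.
apply/andP; split.
- exact: le_trans (@inf_case R phi w I hprec hcomp hrand hI) xL.
- exact: le_trans xU (@sup_case R phi w I hcomp hrand hI).
Qed.
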